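(* There does not exist an arrangement of lines in $\mathbb{C}\mathbb{P}^2$ defined over $\mathbb{R}$ (i.e. each line is the zero set of a linear form with real coefficients) which supports a $4$-net structure.
   Context: Let $\overline{\mathcal{A}}$ be a finite arrangement of lines in $\mathbb{C}\mathbb{P}^2$. A $4$-net (i.e. a $(4,d)$-net, $d\ge2$) on $\overline{\mathcal{A}}$ is a partition $\overline{\mathcal{A}}=\overline{\mathcal{A}}_1\sqcup\overline{\mathcal{A}}_2\sqcup\overline{\mathcal{A}}_3\sqcup\overline{\mathcal{A}}_4$ together with a set $\mathcal{X}\subset\mathbb{C}\mathbb{P}^2$ of points such that: (i) $|\overline{\mathcal{A}}_1|=\dots=|\overline{\mathcal{A}}_4|=d$; (ii) if $\overline{H}\in\overline{\mathcal{A}}_i$, $\overline{H}'\in\overline{\mathcal{A}}_j$ with $i\neq j$, then $\overline{H}\cap\overline{H}'\in\mathcal{X}$; (iii) for every $p\in\mathcal{X}$ and every $i$, exactly one line of $\overline{\mathcal{A}}_i$ passes through $p$; (iv) for any $\overline{H},\overline{H}'\in\overline{\mathcal{A}}_i$ there is a sequence $\overline{H}=\overline{H}'_0,\overline{H}'_1,\dots,\overline{H}'_r=\overline{H}'$ in $\overline{\mathcal{A}}_i$ with $\overline{H}'_{j-1}\cap\overline{H}'_j\notin\mathcal{X}$ for $1\le j\le r$. *)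

(* Defs.v *)
From HB Require Import structures.
From mathcomp Require Import all_boot all_order all_algebra.
From mathcomp Require Import reals.
From mathcomp Require Import complex.
Set Implicit Arguments. Unset Strict Implicit. Unset Printing Implicit Defensive.
Import Order.TTheory GRing.Theory Num.Theory.
Local Open Scope ring_scope.
Local Open Scope complex_scope.

(* Points of CP^2 are represented by nonzero vectors of C^3, C := R[i]
   (the complex numbers over the real numbers R : realType). *)

Definition on_line (R : realType) (a : 'rV[R]_3) (p : 'rV[R[i]]_3) : Prop :=
  \sum_(k < 3) (a 0 k)%:C * p 0 k = 0.

(* A set of points of CP^2 is represented by its cone: a predicate on C^3
   containing only nonzero vectors and stable under nonzero scaling. *)
Definition proj_set (R : realType) (X : 'rV[R[i]]_3 -> Prop) : Prop :=
  (forall p, X p -> p != 0) /\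
  (forall (p : 'rV[R[i]]_3) (c : R[i]), c != 0 -> X p -> X (c *: p)).

(* "the point H ∩ H' belongs to X" (H, H' distinct lines) *)
Definition meet_in (R : realType) (X : 'rV[R[i]]_3 -> Prop) (a b : 'rV[R]_3) : Prop :=
  forall p, p != 0 -> on_line a p -> on_line b p -> X p.

Fixpoint chain (T : Type) (r : T -> T -> Prop) (x : T) (s : seq T) : Prop :=
  match s with
  | [::] => True
  | y :: s' => r x y /\ chain r y s'
  end.

(* An arrangement of 4d distinct real lines, listed as L i a (class i, index a),
   so that the classes A_i = {L i a | a : 'I_d} partition it into 4 blocks
   of size d. *)
Definition real_arrangement4 (R : realType) (d : nat) (L : 'I_4 -> 'I_d -> 'rV[R]_3) : Prop :=
  (forall i a, L i a != 0) /\
  (forall i a j b, (i, a) != (j, b) -> ~ (exists c : R, L j b = c *: L i a)).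

Definition is_4net (R : realType) (d : nat) (L : 'I_4 -> 'I_d -> 'rV[R]_3)
    (X : 'rV[R[i]]_3 -> Prop) : Prop :=
  (2 <= d)%N /\
  proj_set X /\
  (forall i j a b, i != j -> meet_in X (L i a) (L j b)) /\
  (forall p, X p -> forall i, exists! a : 'I_d, on_line (L i a) p) /\
  (forall i (a b : 'I_d), exists s : seq 'I_d,
     chain (fun x y => ~ meet_in X (L i x) (L i y)) a s /\ last a s = b).

(* Main.v *)
Require Import Defs.
From HB Require Import structures.
From mathcomp Require Import all_boot all_order all_algebra.
From mathcomp Require Import ring lra.
From mathcomp Require Import reals complex.

Set Implicit Arguments. Unset Strict Implicit. Unset Printing Implicit Defensive.
Import Order.TTheory GRing.Theory Num.Theory.
Local Open Scope ring_scope.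

Section V.
Variable R : realFieldType.
Definition vec := (R * R * R)%type.
Definition dot (a b : vec) : R :=
  let: (a0,a1,a2) := a in let: (b0,b1,b2) := b in a0*b0 + a1*b1 + a2*b2.
Definition cross (a b : vec) : vec :=
  let: (a0,a1,a2) := a in let: (b0,b1,b2) := b in
  (a1*b2 - a2*b1, a2*b0 - a0*b2, a0*b1 - a1*b0).

Ltac vsolve := repeat match goal with v : vec |- _ => move: v => [[? ?] ?] end;
  rewrite /dot /cross /=; ring.

Lemma lagrange a b : dot (cross a b) (cross a b) = dot a a * dot b b - (dot a b)^+2.
Proof. vsolve. Qed.

Lemma detid P n m1 m2 :
  dot P (cross m1 n) * dot (cross n P) (cross m2 n) - dot P (cross m2 n) * dot (cross n P) (cross m1 n)
  = dot n (cross m1 m2) * dot (cross n P) (cross n P).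
Proof. vsolve. Qed.



Lemma gramid P n m1 m2 :
  dot (cross n P) (cross m1 n) * dot (cross n P) (cross m2 n) =
  dot (cross n P) (cross n P) * dot (cross m1 n) (cross m2 n) - dot n n * dot P (cross m1 n) * dot P (cross m2 n).
Proof. vsolve. Qed.

Lemma qq n m1 m2 : dot (cross (cross m1 n) (cross m2 n)) (cross (cross m1 n) (cross m2 n)) = (dot n (cross m1 m2))^+2 * dot n n.
Proof. vsolve. Qed.

Lemma mq n m1 m2 : (dot m2 (cross m1 n))^+2 = (dot n (cross m1 m2))^+2.
Proof. vsolve. Qed.

Lemma pq P n m : dot (cross P (cross m n)) (cross P (cross m n)) =
  (dot n P)^+2 * dot m m - 2 * dot n P * dot m P * dot m n + (dot m P)^+2 * dot n n.
Proof. vsolve. Qed.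

Lemma wid P n m1 m2 : dot (cross m1 m2) (cross m1 m2) * dot n P =
  dot (cross m1 m2) P * dot n (cross m1 m2) - dot m1 P * dot n (cross (cross m1 m2) m2) + dot m2 P * dot n (cross (cross m1 m2) m1).
Proof. vsolve. Qed.

Lemma nq n m : dot (cross n (cross m n)) (cross n (cross m n)) = dot n n * dot (cross m n) (cross m n).
Proof. vsolve. Qed.
Lemma sPQ P n m : dot n n * dot P (cross m n) = dot (cross n P) (cross n (cross m n)).
Proof. vsolve. Qed.
Lemma dot_ge0 a : 0 <= dot a a.
Proof. case: a => [[a0 a1] a2]; rewrite /dot /=; nra. Qed.
Lemma cauchy a b : (dot a b)^+2 <= dot a a * dot b b.
Proof. have := dot_ge0 (cross a b); rewrite lagrange subr_ge0 //. Qed.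
Implicit Types s xi yi xj yj xk yk : R.
Definition good s xi yi xj yj :=
  0 <= xi*yi*(xj*yj) /\ xj^+2 * yi^+2 <= xi^+2 * yj^+2 /\ s*xi*xj + yi*yj != 0.

Lemma sel0 s xi yi xj yj xk yk : 0 < s ->
  xi*yj - xj*yi != 0 -> xi*yk - xk*yi != 0 -> xj*yk - xk*yj != 0 ->
  0 <= xi*yi*(xj*yj) -> xj^+2 * yi^+2 <= xi^+2 * yj^+2 ->
  good s xi yi xj yj \/ good s xi yi xk yk.
Proof.
move=> s0 dij dik djk hs hb.
have [e|e] := eqVneq (s*xi*xj + yi*yj) 0; last by left; split.
right.
have hx : xi * xj = 0.
  have : (xi*xj)^+2 * s <= 0 by nra.
  move=> h; apply/eqP; rewrite -sqrf_eq0; apply/eqP.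
  apply: le_anti; rewrite sqr_ge0 andbT.
  by rewrite -(pmulr_lle0 _ s0).
have hy : yi * yj = 0 by nra.
move/eqP: hx; rewrite mulf_eq0 => /orP[/eqP xi0|/eqP xj0].
  move/eqP: hy; rewrite mulf_eq0 => /orP[/eqP yi0|/eqP yj0].
    by move: dij; rewrite xi0 yi0 => /eqP[]; ring.
  have : xj * yi = 0.
    move: hb; rewrite xi0 yj0 expr0n /= mul0r -exprMn => hb.
    by apply/eqP; rewrite -sqrf_eq0; apply/eqP/le_anti; rewrite hb sqr_ge0.
  move=> h; by move: dij; rewrite xi0 yj0 h => /eqP[]; ring.
have yj0 : yj != 0 by apply: contraNneq dij => ->; rewrite xj0; apply/eqP; ring.
have yi0 : yi = 0 by move/eqP: hy; rewrite mulf_eq0 (negbTE yj0) orbF => /eqP.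
have xi0 : xi != 0 by apply: contraNneq dij => ->; rewrite xj0; apply/eqP; ring.
have xk0 : xk != 0 by apply: contraNneq djk => ->; rewrite xj0; apply/eqP; ring.
split; first by rewrite yi0 !(mul0r,mulr0).
split; first by rewrite yi0 expr0n /= mulr0; apply: mulr_ge0; apply: sqr_ge0.
rewrite yi0 mul0r addr0 !mulf_neq0 //; exact: lt0r_neq0.
Qed.

Lemma sel1 s xi yi xj yj xk yk : 0 < s ->
  xi*yj - xj*yi != 0 -> xi*yk - xk*yi != 0 -> xj*yk - xk*yj != 0 ->
  0 <= xi*yi*(xj*yj) ->
  [\/ good s xi yi xj yj, good s xi yi xk yk, good s xj yj xi yi | good s xj yj xk yk].
Proof.
move=> s0 dij dik djk hs.
have [hb|hb] := lerP (xj^+2 * yi^+2) (xi^+2 * yj^+2).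
  by case: (sel0 s0 dij dik djk hs hb) => h; [apply: Or41|apply: Or42].
have dji : xj*yi - xi*yj != 0 by rewrite -oppr_eq0 opprB.
have hs' : 0 <= xj*yj*(xi*yi) by rewrite mulrC.
by case: (sel0 s0 dji djk dik hs' (ltW hb)) => h; [apply: Or43|apply: Or44].
Qed.

Lemma good_ineq s xi yi xj yj : 0 < s -> good s xi yi xj yj ->
  s * xj^+2 * (s * xi^+2 + yi^+2) <= (s*xi*xj + yi*yj)^+2.
Proof.
move=> s0 [ha [hb _]].
set u := xi*yj; set v := xj*yi.
have huv : v^+2 <= u*v.
  have h1 : 0 <= u*v by rewrite /u /v; nra.
  have h2 : v^+2 <= u^+2 by rewrite /u /v !exprMn mulrC [X in _ <= X]mulrC; nra.
  nra.
have : s*v^+2 <= 2*s*(u*v) by nra.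
rewrite /u /v => h.
have : 0 <= yi^+2 * yj^+2 by nra.
nra.
Qed.

Definition D (x a : vec) : R := (dot a x)^+2 / (dot a a * dot x x).

Definition i0 : 'I_3 := @Ordinal 3 0 isT.
Definition i1 : 'I_3 := @Ordinal 3 1 isT.
Definition i2 : 'I_3 := @Ordinal 3 2 isT.

Lemma finstep (n P : vec) (m : 'I_3 -> vec) k l :
  dot n P != 0 -> dot (m l) P = 0 -> 0 < dot n n -> 0 < dot P P ->
  0 < dot (m l) (m l) -> 0 < dot (cross (m k) n) (cross (m k) n) ->
  dot n (cross (m k) (m l)) != 0 ->
  (dot P (cross (m l) n))^+2 * dot (cross (m k) n) (cross (m k) n) <
  (dot (cross (m k) n) (cross (m l) n))^+2 * dot P P ->
  dot (m l) (cross (m k) n) != 0 /\ D (cross (m k) n) (m l) < D P n.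
Proof.
move=> hnP hmP s0 p0 ml0 qk0 nw hT.
split.
  by rewrite -sqrf_eq0 mq sqrf_eq0.
rewrite /D mq.
have t0 : 0 < (dot n P)^+2 by rewrite lt_neqAle sqr_ge0 andbT eq_sym sqrf_eq0.
rewrite ltr_pdivrMr ?mulr_gt0 // mulrAC ltr_pdivlMr ?mulr_gt0 //.
have e1 : (dot n (cross (m k) (m l)))^+2 * dot n n =
  dot (cross (cross (m k) n) (cross (m l) n)) (cross (cross (m k) n) (cross (m l) n)) by rewrite qq.
have e2 : (dot n P)^+2 * dot (m l) (m l) = dot (cross P (cross (m l) n)) (cross P (cross (m l) n)).
  by rewrite pq hmP; ring.
rewrite mulrA e1 mulrA e2 (lagrange (cross (m k) n) (cross (m l) n)) (lagrange P (cross (m l) n)).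
move: hT; generalize (dot (cross (m k) n) (cross (m k) n)) (dot (cross (m l) n) (cross (m l) n)) (dot (cross (m k) n) (cross (m l) n)) (dot P (cross (m l) n)) (dot P P) => A B C E F h; nra.
Qed.

Lemma goodT s W t A B PP xi yi xj yj : 0 < s -> 0 < W -> 0 < t ->
  good s xi yi xj yj -> yi*yi = W*A - s*xi*xi -> yi*yj = W*B - s*xi*xj ->
  W = s*PP - t -> xj^+2*A < B^+2*PP.
Proof.
move=> s0 W0 t0 hg e1 e2 e3.
have hi := good_ineq s0 hg.
case: hg => _ [_ hE].
have e1' : W*A = s*xi^+2 + yi^+2 by rewrite [yi^+2]expr2 e1; ring.
have e2' : W*B = s*xi*xj + yi*yj by rewrite e2; ring.
have e3' : s*PP = W + t by rewrite e3; ring.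
have sW : 0 < s * W^+2 by rewrite mulr_gt0 // exprn_gt0.
rewrite -(ltr_pM2l sW).
have -> : s*W^+2*(xj^+2*A) = W * (s*xj^+2*(W*A)) by ring.
have -> : s*W^+2*(B^+2*PP) = (W*B)^+2 * (s*PP) by ring.
rewrite e1' e2' e3'.
move: hE hi; set E := s*xi*xj + yi*yj; set G := s*xj^+2*_ => hE hi.
have E0 : 0 < E^+2 by rewrite lt_neqAle sqr_ge0 andbT eq_sym sqrf_eq0.
have : W * G <= W * E^+2 by rewrite ler_pM2l.
nra.
Qed.

Lemma pos_l a b : 0 < dot (cross a b) (cross a b) -> 0 < dot a a.
Proof.
rewrite lagrange => h; rewrite lt_neqAle dot_ge0 andbT eq_sym; apply/eqP => e.
move: h; rewrite e mul0r sub0r oppr_gt0 => h.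
by have := sqr_ge0 (dot a b); rewrite leNgt h.
Qed.
Lemma cross_sym a b : dot (cross a b) (cross a b) = dot (cross b a) (cross b a).
Proof. vsolve. Qed.
Lemma pos_r a b : 0 < dot (cross a b) (cross a b) -> 0 < dot b b.
Proof. by rewrite cross_sym; apply: pos_l. Qed.
Lemma pos_dot a b : dot a b != 0 -> 0 < dot a a /\ 0 < dot b b.
Proof.
move=> h.
have hc := cauchy a b.
have h2 : 0 < (dot a b)^+2 by rewrite lt_neqAle sqr_ge0 andbT eq_sym sqrf_eq0.
split; rewrite lt_neqAle dot_ge0 andbT eq_sym; apply/eqP => e; move: hc; rewrite e ?mul0r ?mulr0 => hc;
  by have := lt_le_trans h2 hc; rewrite ltxx.
Qed.
Lemma pos_ne0 x : x != 0 -> 0 < x^+2 :> R.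
Proof. by move=> h; rewrite lt_neqAle sqr_ge0 andbT eq_sym sqrf_eq0. Qed.

Definition Tp (n P : vec) (m : 'I_3 -> vec) (k l : 'I_3) :=
  (dot P (cross (m l) n))^+2 * dot (cross (m k) n) (cross (m k) n) <
  (dot (cross (m k) n) (cross (m l) n))^+2 * dot P P.

Lemma core (n P : vec) (m : 'I_3 -> vec) :
  dot n P != 0 -> (forall k, dot (m k) P = 0) ->
  (forall k l, k != l -> 0 < dot (cross (m k) (m l)) (cross (m k) (m l))) ->
  exists k l, k != l /\ dot (m l) (cross (m k) n) != 0 /\ D (cross (m k) n) (m l) < D P n.
Proof.
move=> hnP hmP hmm.
have [s0 p0] := pos_dot hnP.
have nw : forall k l, k != l -> dot n (cross (m k) (m l)) != 0.
  move=> k l kl; apply/eqP => e.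
  have := wid P n (m k) (m l); rewrite !hmP e !(mul0r,mulr0,subr0,addr0) => /eqP.
  by rewrite mulf_eq0 (negbTE hnP) orbF (gt_eqF (hmm k l kl)).
have Qp : forall k l, k != l -> 0 < dot (cross (m k) n) (cross (m k) n).
  move=> k l kl; apply: (@pos_l _ (cross (m l) n)).
  by rewrite qq mulr_gt0 // pos_ne0 // nw.
have mp : forall k l, k != l -> 0 < dot (m l) (m l).
  by move=> k l kl; apply: (@pos_r (m k)); apply: hmm.
suff [k [l [kl hT]]] : exists k l, k != l /\ Tp n P m k l.
  by exists k, l; split => //; apply: finstep => //; [apply: mp kl| apply: Qp kl| apply: nw].
have t0 := pos_ne0 hnP.
have [W0|Wp] : dot (cross n P) (cross n P) = 0 \/ 0 < dot (cross n P) (cross n P).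
  by have := dot_ge0 (cross n P); rewrite le_eqVlt eq_sym => /orP[/eqP->|->]; [left|right].
- have X0 : forall k, dot P (cross (m k) n) = 0.
    move=> k; have := cauchy (cross n P) (cross n (cross (m k) n)).
    rewrite -sPQ W0 mul0r => h.
    have : dot n n * dot P (cross (m k) n) = 0.
      by apply/eqP; rewrite -sqrf_eq0; apply/eqP/le_anti; rewrite h sqr_ge0.
    by move/eqP; rewrite mulf_eq0 (gt_eqF s0) /= => /eqP.
  have fin : forall k l, k != l -> dot (cross (m k) n) (cross (m l) n) != 0 -> Tp n P m k l.
    by move=> k l kl h; rewrite /Tp X0 expr0n /= mul0r mulr_gt0 // pos_ne0.
  have [h01|h01] := eqVneq (dot (cross (m i0) n) (cross (m i1) n)) 0; last first.
    by exists i0, i1; split => //; apply: fin.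
  have [h02|h02] := eqVneq (dot (cross (m i0) n) (cross (m i2) n)) 0; last first.
    by exists i0, i2; split => //; apply: fin.
  exfalso.
  have := detid (cross (m i0) n) n (m i1) (m i2).
  rewrite h01 h02 !mul0r subr0 nq => /esym/eqP.
  rewrite !mulf_eq0 (negbTE (nw i1 i2 isT)) (gt_eqF s0) (gt_eqF (Qp i0 i1 isT)) //.
- pose X k := dot P (cross (m k) n).
  pose Y k := dot (cross n P) (cross (m k) n).
  have det : forall k l, k != l -> X k * Y l - X l * Y k != 0.
    move=> k l kl; rewrite /X /Y detid mulf_neq0 //; [exact: nw | by rewrite gt_eqF].
  have gT : forall k l, k != l -> good (dot n n) (X k) (Y k) (X l) (Y l) -> Tp n P m k l.
    move=> k l kl hg; apply: (goodT s0 Wp t0 hg).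
    - by rewrite /Y gramid.
    - by rewrite /Y gramid.
    - by rewrite lagrange.
  have pick : forall i j k, i != j -> i != k -> j != k -> 0 <= X i * Y i * (X j * Y j) ->
      exists k l, k != l /\ Tp n P m k l.
    move=> i j k ij ik jk hs.
    have := sel1 s0 (det _ _ ij) (det _ _ ik) (det _ _ jk) hs.
    case=> hg.
    + by exists i, j; split => //; apply: gT.
    + by exists i, k; split => //; apply: gT.
    + by exists j, i; split; [rewrite eq_sym|apply: gT; rewrite // eq_sym].
    + by exists j, k; split => //; apply: gT.
  have [h|h] := lerP 0 (X i0 * Y i0 * (X i1 * Y i1)); first by apply: (pick i0 i1 i2).
  have [h'|h'] := lerP 0 (X i0 * Y i0 * (X i2 * Y i2)); first by apply: (pick i0 i2 i1).
  apply: (pick i1 i2 i0) => //.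
  move: h h'; generalize (X i0 * Y i0) (X i1 * Y i1) (X i2 * Y i2) => a b c h h'; nra.
Qed.
End V.
Ltac vsolve := repeat match goal with v : vec _ |- _ => move: v => [[? ?] ?] end;
  rewrite /dot /cross /=; ring.

Section Main.
Variable R : realType.
Local Open Scope complex_scope.

Definition tv (l : 'rV[R]_3) : vec R := (l 0 (i0), l 0 (i1), l 0 (i2)).
Definition cl (x : vec R) : 'rV[R[i]]_3 := \row_(k < 3) (nth 0 [:: x.1.1; x.1.2; x.2] k)%:C.

Lemma on_lineE l x : on_line l (cl x) <-> dot (tv l) x = 0.
Proof.
case: x => [[x0 x1] x2].
rewrite /on_line !big_ord_recl big_ord0 !mxE /=.
have -> : lift ord0 (lift ord0 ord0) = i2 :> 'I_3 by apply: val_inj.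
have -> : lift ord0 ord0 = i1 :> 'I_3 by apply: val_inj.
have -> : ord0 = i0 :> 'I_3 by apply: val_inj.
rewrite -!rmorphM addr0 addrA -!rmorphD /=.
split; first by case=> ->.
by move=> ->.
Qed.

Lemma sq3 (x y z : R) : x*x + y*y + z*z = 0 -> [/\ x = 0, y = 0 & z = 0].
Proof.
move=> h.
have hx : x^+2 = 0 by apply/le_anti; rewrite sqr_ge0 andbT; nra.
have hy : y^+2 = 0 by apply/le_anti; rewrite sqr_ge0 andbT; nra.
have hz : z^+2 = 0 by apply/le_anti; rewrite sqr_ge0 andbT; nra.
by split; apply/eqP; rewrite -sqrf_eq0; apply/eqP.
Qed.

Lemma dot0 (a : vec R) : dot a a = 0 -> a = (0,0,0).
Proof. by case: a => [[a0 a1] a2] /= /sq3 [-> -> ->]. Qed.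

Lemma cl_neq0 x : 0 < dot x x -> cl x != 0.
Proof.
case: x => [[x0 x1] x2] hx; apply/eqP => e.
have h0 := congr1 (fun M : 'rV[R[i]]_3 => M 0 i0) e.
have h1 := congr1 (fun M : 'rV[R[i]]_3 => M 0 i1) e.
have h2 := congr1 (fun M : 'rV[R[i]]_3 => M 0 i2) e.
move: h0 h1 h2; rewrite !mxE /= => [[e0]] [e1] [e2].
by move: hx; rewrite /= e0 e1 e2 !mulr0 !addr0 ltxx.
Qed.

Lemma tv_inj (u v : 'rV[R]_3) : tv u = tv v -> u = v.
Proof.
rewrite /tv => [[e0 e1 e2]]; apply/matrixP => i j; rewrite (ord1 i).
case: j => [[|[|[|j]]] hj] //.
- by have -> : Ordinal hj = i0 by apply: val_inj.
- by have -> : Ordinal hj = i1 by apply: val_inj.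
- by have -> : Ordinal hj = i2 by apply: val_inj.
Qed.

Lemma par (a b : vec R) : dot (cross a b) (cross a b) = 0 -> 0 < dot a a ->
  b = let: (a0,a1,a2) := a in let c := dot a b / dot a a in (c*a0, c*a1, c*a2).
Proof.
move=> /dot0; case: a => [[a0 a1] a2]; case: b => [[b0 b1] b2] /= [c0 c1 c2] ha.
have hn : a0*a0 + a1*a1 + a2*a2 != 0 by rewrite gt_eqF.
have key : forall x y, x * (a0*a0 + a1*a1 + a2*a2) = (a0*b0 + a1*b1 + a2*b2) * y ->
   x = (a0*b0 + a1*b1 + a2*b2) / (a0*a0 + a1*a1 + a2*a2) * y.
  by move=> x y e; rewrite mulrAC -[x](mulfK hn) e.
congr (_,_,_); apply: key; apply/eqP; rewrite -subr_eq0; apply/eqP.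
- by transitivity (a2*(a2*b0 - a0*b2) - a1*(a0*b1 - a1*b0)); [ring| rewrite c1 c2; ring].
- by transitivity (a0*(a0*b1 - a1*b0) - a2*(a1*b2 - a2*b1)); [ring| rewrite c0 c2; ring].
- by transitivity (a1*(a1*b2 - a2*b1) - a0*(a2*b0 - a0*b2)); [ring| rewrite c0 c1; ring].
Qed.

Lemma dot_cross_l (a b : vec R) : dot a (cross a b) = 0.
Proof. vsolve. Qed.
Lemma dot_cross_r (a b : vec R) : dot b (cross a b) = 0.
Proof. vsolve. Qed.
End Main.

Theorem theorem5p2 (R : realType) (d : nat) (L : 'I_4 -> 'I_d -> 'rV[R]_3)
    (X : 'rV[R[i]]_3 -> Prop) :
  real_arrangement4 L -> ~ is_4net L X.
Proof.
move=> [hL0 hLp] [hd [_ [hii [hiii _]]]].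
pose ln (x : 'I_4 * 'I_d) := tv (L x.1 x.2).
have lnpos : forall x, 0 < dot (ln x) (ln x).
  move=> x; rewrite lt_neqAle dot_ge0 andbT eq_sym; apply/negP => /eqP /dot0 e.
  apply: (negP (hL0 x.1 x.2)); apply/eqP; apply: tv_inj.
  change (ln x = tv 0); rewrite e /tv !mxE //.
have crpos : forall x y, x != y -> 0 < dot (cross (ln x) (ln y)) (cross (ln x) (ln y)).
  move=> x y xy; rewrite lt_neqAle dot_ge0 andbT eq_sym; apply/negP => /eqP e.
  have ey := par e (lnpos x).
  apply: (hLp x.1 x.2 y.1 y.2); first by case: x y xy {e ey} => [? ?] [? ?].
  exists (dot (ln x) (ln y) / dot (ln x) (ln x)); apply: tv_inj.
  change (ln y = tv (dot (ln x) (ln y) / dot (ln x) (ln x) *: L x.1 x.2)).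
  set c := dot (ln x) (ln y) / dot (ln x) (ln x) in ey *.
  by rewrite {1}ey /ln /tv /= !mxE.
have inX : forall x y, x.1 != y.1 -> X (cl (cross (ln x) (ln y))).
  move=> x y h; apply: (hii x.1 y.1 x.2 y.2 h).
  - apply: cl_neq0; apply: crpos; apply: contraNneq h => -> //.
  - by apply/on_lineE; apply: dot_cross_l.
  - by apply/on_lineE; apply: dot_cross_r.
pose a0 : 'I_d := Ordinal (ltnW hd).
pose a1 : 'I_d := Ordinal hd.
pose c0 : 'I_4 := ord0.
pose c1 : 'I_4 := @Ordinal 4 1 isT.
pose good3 := fun t : ('I_4 * 'I_d) * ('I_4 * 'I_d) * ('I_4 * 'I_d) =>
  (t.1.1.1 != t.1.2.1) && (dot (ln t.2) (cross (ln t.1.1) (ln t.1.2)) != 0).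
pose F := fun t : ('I_4 * 'I_d) * ('I_4 * 'I_d) * ('I_4 * 'I_d) =>
  D (cross (ln t.1.1) (ln t.1.2)) (ln t.2).
have gw : good3 ((c0, a0), (c1, a0), (c0, a1)).
  apply/andP; split => //; apply/negP => /eqP e.
  have hx := inX (c0, a0) (c1, a0) isT.
  have [al [_ uq]] := hiii _ hx c0.
  have e1 := uq a0 (proj2 (on_lineE _ _) (dot_cross_l _ _)).
  have e2 := uq a1 (proj2 (on_lineE _ _) e).
  by move: (congr1 val (etrans (esym e1) e2)).
case: (@arg_minP _ R _ _ good3 F gw) => [[[x y] z] /andP[hxy hnz] hmin].
set P := cross (ln x) (ln y) in hnz hmin.
have hP : X (cl P) := inX x y hxy.
have hex : forall k, exists al, dot (ln (lift z.1 k, al)) P == 0.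
  move=> k; have [al [h _]] := hiii _ hP (lift z.1 k).
  by exists al; apply/eqP; apply/on_lineE.
pose al k := odflt a0 [pick α | dot (ln (lift z.1 k, α)) P == 0].
have hal : forall k, dot (ln (lift z.1 k, al k)) P = 0.
  move=> k; rewrite /al; case: pickP => [α /eqP //|h].
  by have [β] := hex k; rewrite h.
pose m k := ln (lift z.1 k, al k).
have hmm : forall k l, k != l -> 0 < dot (cross (m k) (m l)) (cross (m k) (m l)).
  move=> k l kl; apply: crpos; apply: contraNneq kl => e; apply/eqP; apply: (@lift_inj _ z.1); exact: (congr1 fst e).
have [k [l [kl [hne hlt]]]] := core hnz hal hmm.
have gj : good3 ((lift z.1 k, al k), z, (lift z.1 l, al l)).
  by apply/andP; split => //=; rewrite eq_sym neq_lift.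
have := hmin _ gj.
by rewrite /F /= leNgt hlt.
Qed.
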